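(* In the Riemann problem setting of the context, assume the initial data generate a left rarefaction and a right rarefaction, i.e. $p_*\le p_L$ and $p_*\le p_R$. Then for all $K,M\in\{L,R\}$: $$|u_*-u_K|\le[\![u]\!],\qquad 0\le p_K-p_*\le\rho_Ka_K[\![u]\!],\qquad|\rho_{*K}-\rho_M|\le\rho_Ka_K^{-1}[\![u]\!]+|[\![\rho]\!]|.$$
   Context: Let $\gamma\in(1,2]$. Consider the one-dimensional Riemann problem for the complete Euler equations with left and right primitive states $V_K=(\rho_K,u_K,p_K)$, $\rho_K,p_K>0$, $K=L,R$ (transverse velocity components play no role), sound speeds $a_K=\sqrt{\gamma p_K/\rho_K}$, and jumps $[\![\rho]\!]=\rho_R-\rho_L$, $[\![u]\!]=u_R-u_L$, $[\![p]\!]=p_R-p_L$. For $K=L,R$ define $f_K(p)=(p-p_K)\big(\frac{A_K}{p+B_K}\big)^{1/2}$ if $p>p_K$ and $f_K(p)=\frac{2a_K}{\gamma-1}\big[(p/p_K)^{\frac{\gamma-1}{2\gamma}}-1\big]$ if $p\le p_K$, with $A_K=\frac2{(\gamma+1)\rho_K}$, $B_K=\frac{\gamma-1}{\gamma+1}p_K$. The star pressure $p_*$ solves $f_L(p_* )+f_R(p_* )+u_R-u_L=0$ and the star velocity is $u_*=u_L-f_L(p_* )=u_R+f_R(p_* )$. The $K$-wave is a rarefaction if $p_*\le p_K$ and a shock if $p_*>p_K$. The density on the $K$-side of the contact discontinuity is $\rho_{*K}=\rho_K(p_*/p_K)^{1/\gamma}$ if the $K$-wave is a rarefaction, and $\rho_{*K}=\rho_K\frac{p_*/p_K+\frac{\gamma-1}{\gamma+1}}{\frac{\gamma-1}{\gamma+1}p_*/p_K+1}$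 if it is a shock. *)

(* Defs.v *)
From Stdlib Require Import Reals.
Open Scope R_scope.

(* Primitive state (rho, u, p); transverse velocities play no role. *)
Record prim := mkPrim { rho : R; vel : R; pres : R }.

Inductive side := Lside | Rside.

Definition stateOf (VL VR : prim) (K : side) : prim :=
  match K with Lside => VL | Rside => VR end.

Definition sound (gamma : R) (V : prim) : R := sqrt (gamma * pres V / rho V).

Definition A_coef (gamma : R) (V : prim) : R := 2 / ((gamma + 1) * rho V).
Definition B_coef (gamma : R) (V : prim) : R := (gamma - 1) / (gamma + 1) * pres V.

Definition fK (gamma : R) (V : prim) (p : R) : R :=
  if Rlt_dec (pres V) p then
    (p - pres V) * sqrt (A_coef gamma V / (p + B_coef gamma V))
  else
    2 * sound gamma V / (gamma - 1) *
      (Rpower (p / pres V) ((gamma - 1) / (2 * gamma)) - 1).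

Definition rho_star (gamma : R) (V : prim) (pstar : R) : R :=
  if Rle_dec pstar (pres V) then
    rho V * Rpower (pstar / pres V) (1 / gamma)
  else
    rho V * (pstar / pres V + (gamma - 1) / (gamma + 1)) /
      ((gamma - 1) / (gamma + 1) * (pstar / pres V) + 1).

(* Main.v *)
Require Import Defs.
From Stdlib Require Import Reals Lra.
Open Scope R_scope.
Lemma rp_le1 x r : 0 < x <= 1 -> 0 <= r -> Rpower x r <= 1.
Proof. intros [H1 H2] Hr. unfold Rpower. rewrite <- exp_0.
  assert (ln x <= 0). { destruct H2 as [H2|H2]. left; rewrite <- ln_1; apply ln_increasing; lra. subst; rewrite ln_1; lra. }
  destruct (Req_dec (r * ln x) 0) as [E|E]. rewrite E; lra.
  left; apply exp_increasing. nra. Qed.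
Lemma rp_pos x r : 0 < Rpower x r.
Proof. unfold Rpower; apply exp_pos. Qed.
Lemma bern y r : 0 < y <= 1 -> 1 <= r -> 1 + r*(y-1) <= Rpower y r.
Proof. intros [H1 H2] Hr. destruct H2 as [H2|H2].
 - destruct (MVT_cor2 (fun t => Rpower t r - r*t) (fun t => r*Rpower t (r-1) - r*1) y 1 H2) as [c [E Hc]].
   + intros c Hc. apply derivable_pt_lim_minus. apply derivable_pt_lim_power; lra.
     apply derivable_pt_lim_scal. apply derivable_pt_lim_id.
   + assert (Rpower c (r-1) <= 1) by (apply rp_le1; lra).
     assert (Rpower 1 r = 1) by (unfold Rpower; rewrite ln_1, Rmult_0_r, exp_0; reflexivity).
     rewrite H0 in E. assert ((r*Rpower c (r-1) - r*1) * (1-y) <= 0). { assert (0 <= r*(1 - Rpower c (r-1))) by (apply Rmult_le_pos; lra). nra. } lra.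
 - subst. unfold Rpower; rewrite ln_1, Rmult_0_r, exp_0. lra.
Qed.
Lemma side_facts gamma V ps : 1 < gamma <= 2 -> 0 < rho V -> 0 < pres V -> 0 < ps <= pres V ->
  0 <= - fK gamma V ps /\
  pres V - ps <= rho V * sound gamma V * (- fK gamma V ps) /\
  0 <= rho V - rho_star gamma V ps <= rho V / sound gamma V * (- fK gamma V ps).
Proof.
  intros [g1 g2] Hr Hp [Hs Hsp].
  unfold fK, rho_star.
  destruct (Rlt_dec (pres V) ps) as [C|_]; [lra|].
  destruct (Rle_dec ps (pres V)) as [_|C]; [|lra].
  set (a := sound gamma V).
  assert (Ha : 0 < a). { unfold a, sound. apply sqrt_lt_R0. apply Rdiv_lt_0_compat; nra. }
  assert (Ha2 : a * a = gamma * pres V / rho V). { unfold a, sound. apply sqrt_sqrt. left; apply Rdiv_lt_0_compat; nra. }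
  set (x := ps / pres V).
  assert (Hx : 0 < x <= 1). { unfold x. split. apply Rdiv_lt_0_compat; lra.
     apply (Rmult_le_reg_r (pres V)); auto. unfold Rdiv; rewrite Rmult_assoc, Rinv_l; lra. }
  set (b := (gamma - 1) / (2 * gamma)).
  assert (Hb : 0 < b) by (unfold b; apply Rdiv_lt_0_compat; lra).
  set (y := Rpower x b).
  assert (Hy : 0 < y <= 1). { split. apply rp_pos. apply rp_le1; lra. }
  assert (B1 : 1 + (1/b)*(y-1) <= x).
  { replace x with (Rpower y (1/b)). apply bern; auto.
    unfold b. apply (Rmult_le_reg_r ((gamma-1)/(2*gamma))). apply Rdiv_lt_0_compat; lra.
    replace (1 * ((gamma - 1) / (2 * gamma))) with ((gamma - 1) / (2 * gamma)) by ring.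
    replace (1 / ((gamma - 1) / (2 * gamma)) * ((gamma - 1) / (2 * gamma))) with 1 by (field; lra).
    apply (Rmult_le_reg_r (2*gamma)). lra. unfold Rdiv. rewrite Rmult_assoc, Rinv_l; lra.
    unfold y. rewrite Rpower_mult. replace (b * (1/b)) with 1 by (field; lra). apply Rpower_1; lra. }
  set (n := 2 / (gamma - 1)).
  assert (Hn : 2 <= n). { unfold n. apply (Rmult_le_reg_r (gamma-1)). lra. unfold Rdiv; rewrite Rmult_assoc, Rinv_l; lra. }
  assert (B2 : 1 + n*(y-1) <= Rpower x (1/gamma)).
  { replace (Rpower x (1/gamma)) with (Rpower y n). apply bern; auto; lra.
    unfold y, n, b. rewrite Rpower_mult. f_equal. field; lra. }
  assert (Hz : 0 < Rpower x (1/gamma) <= 1). { split. apply rp_pos. apply rp_le1. lra. left; apply Rdiv_lt_0_compat; lra. }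
  replace (- (2 * a / (gamma - 1) * (y - 1))) with (2 * a / (gamma-1) * (1 - y)) by ring.
  assert (0 < 2 * a / (gamma-1)) by (apply Rdiv_lt_0_compat; lra).
  split; [nra|split].
  - assert (E1 : rho V * a * (2 * a / (gamma - 1) * (1 - y)) = pres V * ((1 - y) / b)).
    { replace (rho V * a * (2 * a / (gamma - 1) * (1 - y))) with (rho V * (a*a) * (2 / (gamma - 1) * (1 - y))) by (field; lra).
      rewrite Ha2. unfold b. field. repeat split; lra. }
    rewrite E1.
    assert (E2 : pres V - ps = pres V * (1 - x)) by (unfold x; field; lra).
    rewrite E2. apply Rmult_le_compat_l; [lra|].
    assert ((1/b)*(1-y) = (1-y)/b) by (field; lra). lra.
  - assert (E1 : rho V / a * (2 * a / (gamma - 1) * (1 - y)) = rho V * (n * (1 - y))) by (unfold n; field; lra).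
    rewrite E1. fold x. split. nra.
    assert (rho V - rho V * Rpower x (1/gamma) = rho V * (1 - Rpower x (1/gamma))) by ring.
    rewrite H0. apply Rmult_le_compat_l; lra.
Qed.
Lemma absl a b c d : 0 <= a - b <= c -> Rabs (b - d) <= c + Rabs (a - d).
Proof. intros. unfold Rabs; repeat destruct Rcase_abs; lra. Qed.

Lemma snd_pos gamma V : 1 < gamma -> 0 < rho V -> 0 < pres V -> 0 < sound gamma V.
Proof. intros. unfold sound. apply sqrt_lt_R0. apply Rdiv_lt_0_compat; nra. Qed.

Theorem lemma3p4 (gamma : R) (VL VR : prim) (pstar : R) :
  1 < gamma -> gamma <= 2 ->
  0 < rho VL -> 0 < pres VL -> 0 < rho VR -> 0 < pres VR ->
  0 < pstar ->
  fK gamma VL pstar + fK gamma VR pstar + (vel VR - vel VL) = 0 ->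
  pstar <= pres VL -> pstar <= pres VR ->
  let ustar := vel VL - fK gamma VL pstar in
  let du := vel VR - vel VL in
  let drho := rho VR - rho VL in
  forall K M : side,
    let VK := stateOf VL VR K in
    let VM := stateOf VL VR M in
    Rabs (ustar - vel VK) <= du /\
    0 <= pres VK - pstar /\
    pres VK - pstar <= rho VK * sound gamma VK * du /\
    Rabs (rho_star gamma VK pstar - rho VM)
      <= rho VK / sound gamma VK * du + Rabs drho.
Proof.
  intros g1 g2 rL pL rR pR ps Heq HL HR ustar du drho K M VK VM.
  subst VK VM ustar du drho.
  destruct (side_facts gamma VL pstar) as [FL1 [FL2 [FL3 FL4]]]; try lra.
  destruct (side_facts gamma VR pstar) as [FR1 [FR2 [FR3 FR4]]]; try lra.
  assert (aL := snd_pos gamma VL g1 rL pL).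
  assert (aR := snd_pos gamma VR g1 rR pR).
  set (FL := - fK gamma VL pstar) in *.
  set (FR := - fK gamma VR pstar) in *.
  assert (Edu : vel VR - vel VL = FL + FR) by (unfold FL, FR; lra).
  rewrite Edu.
  assert (0 <= rho VL * sound gamma VL) by (apply Rmult_le_pos; lra).
  assert (0 <= rho VR * sound gamma VR) by (apply Rmult_le_pos; lra).
  assert (0 <= rho VL / sound gamma VL) by (left; apply Rdiv_lt_0_compat; lra).
  assert (0 <= rho VR / sound gamma VR) by (left; apply Rdiv_lt_0_compat; lra).
  destruct K, M; simpl.
  - split. unfold Rabs; destruct Rcase_abs; unfold FL in *; lra.
    split. lra. split. nra.
    eapply Rle_trans. apply (absl (rho VL)). split; [lra|]. apply FL4.
    replace (rho VL - rho VL) with 0 by ring. rewrite Rabs_R0. pose proof (Rabs_pos (rho VR - rho VL)). nra.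
  - split. unfold Rabs; destruct Rcase_abs; unfold FL in *; lra.
    split. lra. split. nra.
    eapply Rle_trans. apply (absl (rho VL)). split; [lra|]. apply FL4.
    rewrite Rabs_minus_sym. nra.
  - split. unfold Rabs; destruct Rcase_abs; unfold FL, FR in *; lra.
    split. lra. split. nra.
    eapply Rle_trans. apply (absl (rho VR)). split; [lra|]. apply FR4.
    nra.
  - split. unfold Rabs; destruct Rcase_abs; unfold FL, FR in *; lra.
    split. lra. split. nra.
    eapply Rle_trans. apply (absl (rho VR)). split; [lra|]. apply FR4.
    replace (rho VR - rho VR) with 0 by ring. rewrite Rabs_R0. pose proof (Rabs_pos (rho VR - rho VL)). nra.
Qed.
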